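(* Let $n\ge 1$, $c\ge 0$ and $0\le k\le c$ be integers. There is a norm-preserving bijection between Gelfand–Tsetlin patterns with $n$ rows, parts in $\{0,1,\ldots,c\}$ and $a_{n,n}=k$, and strict plane partitions with parts in $\{1,2,\ldots,n\}$, at most $c$ columns and exactly $k$ parts equal to $n$. Under this bijection $(a_{1,n},a_{1,n-1},\ldots,a_{1,1})$ is the shape of the corresponding strict plane partition.
   Context: A Gelfand–Tsetlin pattern with $n$ rows and parts in $\{0,\ldots,c\}$ is an array of integers $(a_{i,j})_{1\le i\le n,\ i\le j\le n}$ with $0\le a_{i,j}\le c$ such that, setting $a_{i,i-1}=0$ and $a_{i,n+1}=c$, one has $a_{i,j}\le a_{i-1,j}\le a_{i,j+1}$ for all $2\le i\le n$ and $i-1\le j\le n$ (row $n$ consists of the single entry $a_{n,n}$ and is drawn on top; row $1$ has $n$ entries). Its norm is $\sum_{1\le i\le j\le n}a_{i,j}$. A strict plane partition of shape $\lambda=(\lambda_1\ge\lambda_2\ge\cdots\ge 0)$ is an array of non-negative integers $(\pi_{i,j})_{1\le j\le\lambda_i}$ with weakly decreasing rows and strictly decreasing columns; its norm is the sum of its entries; ''at most $c$ columns'' means $\lambda_1\le c$. *)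

(* Defs.v *)
From mathcomp Require Import all_boot.
Set Implicit Arguments. Unset Strict Implicit. Unset Printing Implicit Defensive.

(** A pattern with n rows is stored as a list [A] of n rows, where
    [nth [::] A (i-1)] is row i (1 <= i <= n), listing
    a_{i,i}, a_{i,i+1}, ..., a_{i,n}  (so it has n-i+1 entries). *)

(* a_{i,j} with 1-based indices, including the boundary conventions
   a_{i,i-1} = 0 and a_{i,n+1} = c. *)
Definition gt_entry (n c : nat) (A : seq (seq nat)) (i j : nat) : nat :=
  if j == i.-1 then 0
  else if j == n.+1 then c
  else nth 0 (nth [::] A i.-1) (j - i).

Definition is_GT (n c : nat) (A : seq (seq nat)) : bool :=
  [&& size A == n,
      all (fun i => size (nth [::] A i.-1) == n - i + 1) (iota 1 n),
      all (fun i => all (fun j => gt_entry n c A i j <= c) (iota i (n - i + 1)))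
          (iota 1 n)
    & all (fun i => all (fun j =>
              (gt_entry n c A i j <= gt_entry n c A i.-1 j) &&
              (gt_entry n c A i.-1 j <= gt_entry n c A i j.+1))
            (iota i.-1 (n - i + 2)))
          (iota 2 n.-1)].

Definition gt_norm (A : seq (seq nat)) : nat := sumn (map sumn A).

(** Stored as the list of rows (row 1 first);
    a row of length 0 is not stored, so all stored rows are nonempty and
    the shape is lambda_i = size of row i (0 beyond the last row). *)

Definition spp_row (P : seq (seq nat)) (i : nat) : seq nat := nth [::] P i.-1.

Definition spp_shape (P : seq (seq nat)) (i : nat) : nat := size (spp_row P i).

Definition is_SPP (P : seq (seq nat)) : bool :=
  [&& all (fun r => 0 < size r) P,
      sorted geq (map size P),
      all (fun r => sorted geq r) P
    &
      all (fun i => all (fun j => nth 0 (nth [::] P i.+1) j < nth 0 (nth [::] P i) j)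
                        (iota 0 (size (nth [::] P i.+1))))
          (iota 0 (size P).-1)].

Definition spp_norm (P : seq (seq nat)) : nat := sumn (map sumn P).

Definition spp_class (n c k : nat) (P : seq (seq nat)) : bool :=
  [&& is_SPP P,
      all (fun x => (1 <= x <= n)) (flatten P),
      all (fun r => size r <= c) P
    & count (fun x => x == n) (flatten P) == k].

Definition gt_class (n c k : nat) (A : seq (seq nat)) : bool :=
  is_GT n c A && (gt_entry n c A n n == k).

(* Main.v *)
Require Import Defs.
From mathcomp Require Import all_boot zify.
Set Implicit Arguments. Unset Strict Implicit. Unset Printing Implicit Defensive.

Lemma count_iota_lt a b : count (fun q => q < a) (iota 0 b) = minn a b.
Proof.
elim: b => [|b IH]; first by rewrite minn0.
rewrite -[b.+1]addn1 iotaD count_cat IH /= add0n addn0; case: ltnP => H; lia.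
Qed.

Lemma count_iota1_le a m : count (fun v => v <= a) (iota 1 m) = minn a m.
Proof.
elim: m => [|m IH]; first by rewrite minn0.
rewrite -[m.+1]addn1 iotaD count_cat IH /= addn0; case: leqP => H; lia.
Qed.

Lemma dc_le (P : pred nat) m : (forall v, 1 <= v -> v < m -> P v.+1 -> P v) ->
  forall d v, 1 <= v -> v + d <= m -> P (v + d) -> P v.
Proof.
move=> H; elim=> [|d IH] v H1 H2; first by rewrite addn0.
move=> HP; apply: IH => //; first lia.
apply: H; [lia|lia|by rewrite -addnS].
Qed.

Lemma dc_count (P : pred nat) m : (forall v, 1 <= v -> v < m -> P v.+1 -> P v) ->
  forall i, 1 <= i <= m -> (i <= count P (iota 1 m)) = P i.
Proof.
elim: m => [|m IH] H i /andP[Hi1 Him]; first lia.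
have H' : forall v, 1 <= v -> v < m -> P v.+1 -> P v.
  by move=> v h1 h2; apply: H => //; lia.
rewrite -[m.+1]addn1 iotaD count_cat /= addn0 add1n.
case HPm: (P m.+1).
- have Hall : forall v, 1 <= v <= m.+1 -> P v.
    move=> v /andP[h1 h2]; apply: (@dc_le P m.+1 H (m.+1 - v)) => //; first lia.
    by rewrite subnKC.
  have -> : count P (iota 1 m) = m.
    have := count_size P (iota 1 m); rewrite size_iota.
    have : all P (iota 1 m).
      by apply/allP => v; rewrite mem_iota => hv; apply: Hall; lia.
    by rewrite all_count => /eqP ->; rewrite size_iota.
  rewrite addn1 Him; symmetry; apply: Hall; lia.
- rewrite [_ + false]addn0; case: (ltngtP i m.+1) => Hc; first by rewrite IH //; lia.
  + lia.
  + subst i; rewrite HPm; apply/negbTE; rewrite -ltnNge ltnS.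
    by have := count_size P (iota 1 m); rewrite size_iota.
Qed.

Lemma sorted_count_nth s v q : sorted geq s -> 1 <= v ->
  (q < count (leq v) s) = (v <= nth 0 s q).
Proof.
elim: s q => [|x s IH] q /=; first by case: q => [|q]; rewrite nth_nil; lia.
move=> Hs Hv.
have Hs' : sorted geq s by apply: (path_sorted Hs).
case Hx: (v <= x).
- case: q => [|q] /=; first by rewrite Hx.
  by rewrite add1n ltnS IH.
- have Hall : all (geq x) s.
    move: Hs; rewrite (path_sortedE (leT:=geq)) => [/andP[] //|]; move=> a b d /= h1 h2; lia.
  have -> : count (leq v) s = 0.
    apply/eqP; rewrite -leqn0 leqNgt -has_count; apply/hasPn => y Hy.
    move/allP: Hall => /(_ y Hy) /=; lia.
  case: q => [|q] /=; first by rewrite Hx.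
  symmetry; apply/negbTE; case: (ltnP q (size s)) => Hq.
  + move/allP: Hall => /(_ (nth 0 s q) (mem_nth 0 Hq)) /=; lia.
  + rewrite nth_default //; lia.
Qed.

Lemma conj1 (h : nat -> nat) m : (forall v, 1 <= v -> v < m -> h v.+1 <= h v) ->
  forall i, 1 <= i <= m ->
  count (leq i) [seq count (fun v => q < h v) (iota 1 m) | q <- iota 0 (h 1)] = h i.
Proof.
move=> Hd i Hi; rewrite count_map.
have Hdc : forall q, forall v, 1 <= v -> v < m -> q < h v.+1 -> q < h v.
  by move=> q v h1 h2 h3; apply: leq_trans h3 (Hd v h1 h2).
rewrite (eq_count (a2 := fun q => q < h i)); last first.
  by move=> q /=; rewrite (dc_count (Hdc q)).
rewrite count_iota_lt.
have : h i <= h 1.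
  have Hd' : forall v, 1 <= v -> v < m -> (fun v => h i <= h v) v.+1 -> (fun v => h i <= h v) v.
    by move=> v h1 h2 /= h3; apply: leq_trans h3 (Hd v h1 h2).
  have := @dc_le (fun v => h i <= h v) m Hd' (i - 1) 1 (leqnn 1).
  rewrite /= subnKC; last lia. by move=> ->; lia.
lia.
Qed.

Lemma conj2 s m : sorted geq s -> all (fun x => 1 <= x <= m) s ->
  [seq count (fun v => q < count (leq v) s) (iota 1 m) | q <- iota 0 (count (leq 1) s)] = s.
Proof.
move=> Hs Ha.
have -> : count (leq 1) s = size s.
  apply/eqP; rewrite -all_count; apply/allP => x Hx; move/allP: Ha => /(_ x Hx); lia.
apply: (@eq_from_nth _ 0); first by rewrite size_map size_iota.
move=> q; rewrite size_map size_iota => Hq.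
rewrite (nth_map 0); last by rewrite size_iota.
rewrite nth_iota // add0n.
rewrite (eq_in_count (a2 := fun v => v <= nth 0 s q)); last first.
  by move=> v; rewrite mem_iota => Hv /=; rewrite sorted_count_nth //; lia.
rewrite count_iota1_le.
move/allP: Ha => /(_ _ (mem_nth 0 Hq)) /andP[_ H2]; by apply/minn_idPl.
Qed.

Lemma sorted_map_iota (h : nat -> nat) len s :
  (forall r, s <= r -> r.+1 < s + len -> h r.+1 <= h r) ->
  sorted geq (map h (iota s len)).
Proof.
elim: len s => [|[|len] IH] s H //=.
apply/andP; split; first by apply: H; lia.
have := IH s.+1; rewrite /=; apply => r h1 h2; apply: H; lia.
Qed.

Definition nonempty (x : seq nat) := 0 < size x.

Lemma filter_nth L r : sorted geq (map size L) ->
  nth [::] (filter nonempty L) r = nth [::] L r.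
Proof.
elim: L r => [|x L IH] r //= Hs.
have HL : sorted geq (map size L) by apply: (path_sorted Hs).
case Hx: (nonempty x).
- by case: r => [|r] //=; rewrite IH.
- have Hall : all (geq (size x)) (map size L).
    by move: Hs; rewrite (path_sortedE (leT:=geq)) => [/andP[] //|]; move=> a b d /= h1 h2; lia.
  have E : forall y, y \in L -> y = [::].
    move=> y Hy; have := allP Hall _ (map_f size Hy).
    case: y {Hy} => // z y' /= H; move: Hx; rewrite /nonempty; lia.
  have -> : filter nonempty L = [::].
    elim: L E {IH Hs HL Hall} => //= y L IH E; rewrite (E y) ?mem_head //= IH //.
    by move=> z Hz; apply: E; rewrite inE Hz orbT.
  case: r => [|r] /=; first by move: Hx; rewrite /nonempty; clear; case: x.
  case: (ltnP r (size L)) => Hr; last by rewrite nth_default.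
  by rewrite (E _ (mem_nth [::] Hr)).
Qed.

Lemma flatten_filter L : flatten (filter nonempty L) = flatten L.
Proof. by elim: L => //= x L IH; rewrite /nonempty; case: x => [|a x] /=; rewrite IH. Qed.

Lemma filter_nil_in (T : eqType) (a : pred T) (s : seq T) : (forall x, x \in s -> ~~ a x) -> filter a s = [::].
Proof.
elim: s => //= x s IH H; rewrite (negbTE (H x (mem_head _ _))) IH // => y Hy.
by apply H; rewrite inE Hy orbT.
Qed.

Lemma sumn_map_add T (f g : T -> nat) l :
  sumn (map (fun x => f x + g x) l) = sumn (map f l) + sumn (map g l).
Proof. elim: l => //= x l ->; lia. Qed.

Lemma sumn_count_le s m : all (fun x => x <= m) s ->
  sumn s = sumn [seq count (leq v) s | v <- iota 1 m].
Proof.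
elim: s => [|x s IH] /=.
  by elim: (iota 1 m) => //= v l <-.
move=> /andP[Hx Hs]; rewrite (IH Hs).
rewrite (sumn_map_add (fun v => (v <= x : nat))) sumn_count count_iota1_le; congr (_ + _).
by apply/esym/minn_idPl.
Qed.

Lemma iotaSr m n : iota m n.+1 = iota m n ++ [:: m + n].
Proof. by rewrite -addn1 iotaD. Qed.

Lemma tri (e : nat -> nat -> nat) n :
  sumn [seq sumn [seq e v j | v <- iota 1 j] | j <- iota 1 n] =
  sumn [seq sumn [seq e i j | j <- iota i (n - i + 1)] | i <- iota 1 n].
Proof.
elim: n => [|n IH] //.
rewrite !iotaSr !map_cat !sumn_cat IH.
rewrite (proj1 (eq_in_map (fun i => sumn [seq e i j | j <- iota i (n.+1 - i + 1)])
  (fun i => sumn [seq e i j | j <- iota i (n - i + 1)] + e i n.+1) _)); last first.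
  move=> i; rewrite mem_iota => Hi.
  have -> : n.+1 - i + 1 = (n - i + 1).+1 by lia.
  rewrite iotaSr map_cat sumn_cat /= addn0; congr (_ + e i _); lia.
rewrite sumn_map_add.
have -> : 1 + n = n.+1 by lia.
cbn [map sumn]; rewrite subnn add0n (iotaSr 1 n) map_cat sumn_cat; rewrite /= add1n; lia.
Qed.

Lemma rev_idx (G : nat -> nat) n :
  sumn [seq G (n - r) | r <- iota 0 n] = sumn [seq G j | j <- iota 1 n].
Proof.
elim: n G => [|n IH] G //.
rewrite (iotaSr 1 n) map_cat sumn_cat.
have E : iota 1 n = map (addn 1) (iota 0 n) by rewrite -iotaDl.
rewrite -[iota 0 n.+1]/(0 :: iota 1 n).
cbn [map sumn]; rewrite subn0 [in X in X = _]E -map_comp.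
rewrite (eq_map (g := fun r => G (n - r))); last by move=> r /=; congr G; lia.
rewrite /= IH add1n; lia.
Qed.

Definition rep (n : nat) (e : nat -> nat -> nat) : seq (seq nat) :=
  [seq [seq e i j | j <- iota i (n - i + 1)] | i <- iota 1 n].

Lemma nth_rep n e i : 1 <= i <= n ->
  nth [::] (rep n e) i.-1 = [seq e i j | j <- iota i (n - i + 1)].
Proof.
move=> /andP[h1 h2]; rewrite /rep (nth_map 0); last by rewrite size_iota; lia.
by rewrite nth_iota; [rewrite add1n prednK | lia].
Qed.

Lemma rep_entry n c e i j : 1 <= i -> i <= j -> j <= n -> gt_entry n c (rep n e) i j = e i j.
Proof.
move=> h1 h2 h3; rewrite /gt_entry.
have -> : (j == i.-1) = false by apply/negbTE; lia.
have -> : (j == n.+1) = false by apply/negbTE; lia.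
rewrite nth_rep; last lia.
rewrite (nth_map 0); last by rewrite size_iota; lia.
rewrite nth_iota; last lia.
congr e; lia.
Qed.

Lemma gt_entry_low n c B i : gt_entry n c B i i.-1 = 0.
Proof. by rewrite /gt_entry eqxx. Qed.

Lemma gt_entry_top n c B i : i <= n.+1 -> gt_entry n c B i n.+1 = c.
Proof. move=> h; rewrite /gt_entry eqxx; have -> : (n.+1 == i.-1) = false by apply/negbTE; lia. by []. Qed.

Lemma is_GT_rep n c e :
  (forall i j, 1 <= i -> i <= j -> j <= n -> e i j <= c) ->
  (forall i j, 2 <= i -> i <= n -> i <= j -> j <= n -> e i j <= e i.-1 j) ->
  (forall i j, 2 <= i -> i <= n -> i.-1 <= j -> j < n -> e i.-1 j <= e i j.+1) ->
  (forall i, 2 <= i -> i <= n -> e i.-1 n <= c) ->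
  is_GT n c (rep n e).
Proof.
move=> H1 H2 H3 H4; rewrite /is_GT; apply/and4P; split.
- by rewrite size_map size_iota.
- apply/allP => i; rewrite mem_iota => Hi.
  by rewrite nth_rep ?size_map ?size_iota //; lia.
- apply/allP => i; rewrite mem_iota => Hi; apply/allP => j; rewrite mem_iota => Hj.
  rewrite rep_entry; try lia; apply: H1; lia.
- apply/allP => i; rewrite mem_iota => Hi; apply/allP => j; rewrite mem_iota => Hj.
  have Hi2 : 2 <= i by lia.
  have Hin : i <= n by lia.
  case: (ltnP j i) => Hji.
  + have Ej : j = i.-1 by lia.
    rewrite Ej gt_entry_low /= (rep_entry _ _ (i := i.-1)); try lia.
    rewrite prednK; last lia.
    rewrite rep_entry; try lia.
    have := H3 i i.-1 Hi2 Hin (leqnn _); rewrite prednK; last lia. by apply; lia.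
  + rewrite (rep_entry _ _ (i := i)); try lia.
    rewrite (rep_entry _ _ (i := i.-1)); try lia.
    rewrite H2 //=; last lia.
    case: (ltnP j n) => Hjn.
    * rewrite rep_entry; try lia. apply: H3; lia.
    * have -> : j = n by lia.
      rewrite gt_entry_top; last lia. exact: H4.
Qed.

Lemma GT_props n c A : is_GT n c A ->
  [/\ A = rep n (gt_entry n c A),
      (forall i j, 1 <= i -> i <= j -> j <= n -> gt_entry n c A i j <= c),
      (forall i j, 2 <= i -> i <= n -> i <= j -> j <= n ->
          gt_entry n c A i j <= gt_entry n c A i.-1 j) &
      (forall i j, 2 <= i -> i <= n -> i.-1 <= j -> j <= n ->
          gt_entry n c A i.-1 j <= gt_entry n c A i j.+1)].
Proof.
rewrite /is_GT => /and4P[/eqP Hs Hr Hc Hl]; split.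
- apply: (@eq_from_nth _ [::]); first by rewrite size_map size_iota.
  move=> i' Hi'; rewrite Hs in Hi'.
  have E := @nth_rep n (gt_entry n c A) i'.+1; rewrite /= in E; rewrite E; last lia.
  have Hsz : size (nth [::] A i') = n - i'.+1 + 1.
    by move/allP: Hr => /(_ i'.+1); rewrite mem_iota /= => /(_ _)/eqP; apply; lia.
  apply: (@eq_from_nth _ 0); first by rewrite size_map size_iota Hsz.
  move=> j' Hj'; rewrite Hsz in Hj'.
  rewrite (nth_map 0); last by rewrite size_iota.
  rewrite nth_iota // /gt_entry /=.
  have -> : (i'.+1 + j' == i') = false by apply/negbTE; lia.
  have -> : (i'.+1 + j' == n.+1) = false by apply/negbTE; lia.
  congr nth; lia.
- move=> i j h1 h2 h3.
  have Hi : i \in iota 1 n by rewrite mem_iota; lia.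
  have Hj : j \in iota i (n - i + 1) by rewrite mem_iota; lia.
  exact: (allP (allP Hc i Hi) j Hj).
- move=> i j h1 h2 h3 h4.
  have Hi : i \in iota 2 n.-1 by rewrite mem_iota; lia.
  have Hj : j \in iota i.-1 (n - i + 2) by rewrite mem_iota; lia.
  by have /andP[] := allP (allP Hl i Hi) j Hj.
- move=> i j h1 h2 h3 h4.
  have Hi : i \in iota 2 n.-1 by rewrite mem_iota; lia.
  have Hj : j \in iota i.-1 (n - i + 2) by rewrite mem_iota; lia.
  by have /andP[] := allP (allP Hl i Hi) j Hj.
Qed.

Definition Frow n c A r :=
  [seq count (fun v => q < gt_entry n c A v (n - r)) (iota 1 (n - r))
     | q <- iota 0 (gt_entry n c A 1 (n - r))].
Definition FL n c A := [seq Frow n c A r | r <- iota 0 n].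
Definition F n c A := filter nonempty (FL n c A).

Lemma dec_col n c A : is_GT n c A -> forall v j, 1 <= v -> v < j -> j <= n ->
  gt_entry n c A v.+1 j <= gt_entry n c A v j.
Proof.
move=> /GT_props[_ _ H _] v j h1 h2 h3.
by have := H v.+1 j; apply; lia.
Qed.

Lemma diag n c A : is_GT n c A -> forall v j, 1 <= v -> v < n -> v <= j -> j <= n ->
  gt_entry n c A v j <= gt_entry n c A v.+1 j.+1.
Proof.
move=> /GT_props[_ _ _ H] v j h1 h2 h3 h4.
by have := H v.+1 j; apply; lia.
Qed.

Lemma row1 n c A : is_GT n c A -> forall j, 1 <= j -> j < n ->
  gt_entry n c A 1 j <= gt_entry n c A 1 j.+1.
Proof.
move=> HA j h1 h2; apply: (leq_trans (diag HA (v:=1) (j:=j) _ _ _ _) (dec_col HA (v:=1) (j:=j.+1) _ _ _)); lia.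
Qed.

Lemma size_Frow n c A r : size (Frow n c A r) = gt_entry n c A 1 (n - r).
Proof. by rewrite size_map size_iota. Qed.

Lemma Frow_count n c A : is_GT n c A -> forall r i, r < n -> 1 <= i <= n - r ->
  count (leq i) (Frow n c A r) = gt_entry n c A i (n - r).
Proof.
move=> HA r i Hr Hi; rewrite /Frow.
apply: (conj1 (h := fun v => gt_entry n c A v (n - r))) => //.
move=> v h1 h2; apply: dec_col => //; lia.
Qed.

Lemma Frow_dc n c A r q : is_GT n c A -> r < n ->
  forall v, 1 <= v -> v < n - r ->
  (fun v => q < gt_entry n c A v (n - r)) v.+1 -> (fun v => q < gt_entry n c A v (n - r)) v.
Proof.
move=> HA Hr v h1 h2 /= h3; apply: leq_trans h3 _; apply: dec_col => //; lia.
Qed.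

Lemma Frow_entry n c A : is_GT n c A -> forall r x, r < n -> x \in Frow n c A r ->
  1 <= x <= n - r.
Proof.
move=> HA r x Hr /mapP[q]; rewrite mem_iota add0n => /andP[_ Hq] ->.
apply/andP; split.
- rewrite (dc_count (@Frow_dc n c A r q HA Hr)) //; lia.
- by have := count_size (fun v => q < gt_entry n c A v (n - r)) (iota 1 (n - r)); rewrite size_iota.
Qed.

Lemma Frow_sorted n c A r : sorted geq (Frow n c A r).
Proof.
apply: sorted_map_iota => q _ _; apply: sub_count => v /=; lia.
Qed.

Lemma Frow_col n c A : is_GT n c A -> forall r q, r.+1 < n -> q < size (Frow n c A r.+1) ->
  nth 0 (Frow n c A r.+1) q < nth 0 (Frow n c A r) q.
Proof.
move=> HA r q Hr; rewrite size_Frow => Hq.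
set j := n - r.+1.
have Ej : n - r = j.+1 by rewrite /j; lia.
have Hj1 : 1 <= j by rewrite /j; lia.
have Hjn : j < n by rewrite /j; lia.
have Hq' : q < gt_entry n c A 1 (n - r) by rewrite Ej; apply: leq_trans Hq (row1 HA Hj1 Hjn).
rewrite /Frow (nth_map 0); last by rewrite size_iota.
rewrite (nth_map 0); last by rewrite size_iota.
rewrite !nth_iota // add0n.
have Hr' : r < n by lia.
have key := dc_count (@Frow_dc n c A r.+1 q HA Hr).
have Ht := count_size (fun v => q < gt_entry n c A v (n - r.+1)) (iota 1 (n - r.+1)).
rewrite size_iota in Ht.
move: key Ht.
case E: (count (fun v => q < gt_entry n c A v (n - r.+1)) (iota 1 (n - r.+1))) => [|t] key Ht;
  rewrite (dc_count (@Frow_dc n c A r q HA Hr')); try lia.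
have H : q < gt_entry n c A t.+1 (n - r.+1) by rewrite -key ?leqnn //; lia.
rewrite Ej; apply: leq_trans H _; apply: (diag HA (v:=t.+1) (j:=j)); rewrite /j; lia.
Qed.

Lemma geq_trans : transitive geq.
Proof. move=> a b d /= h1 h2; lia. Qed.

Lemma FL_sizes n c A : is_GT n c A -> sorted geq (map size (FL n c A)).
Proof.
move=> HA; rewrite /FL -map_comp.
rewrite (eq_map (g := fun r => gt_entry n c A 1 (n - r))); last by move=> r /=; rewrite size_Frow.
apply: sorted_map_iota => r _ Hr.
have -> : n - r = (n - r.+1).+1 by lia.
apply: row1 => //; lia.
Qed.

Lemma nth_FL n c A r : r < n -> nth [::] (FL n c A) r = Frow n c A r.
Proof. by move=> Hr; rewrite /FL (nth_map 0) ?size_iota // nth_iota. Qed.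

Lemma size_F n c A : size (F n c A) <= n.
Proof. by rewrite /F size_filter; have := count_size nonempty (FL n c A); rewrite size_map size_iota. Qed.

Lemma F_class n c k A : 1 <= n -> is_GT n c A -> gt_entry n c A n n = k ->
  spp_class n c k (F n c A).
Proof.
move=> hn HA Hk; have [_ Hc _ _] := GT_props HA.
rewrite /spp_class /is_SPP; apply/and4P; split; first apply/and4P; first split.
- exact: filter_all.
- have -> : map size (F n c A) = filter (fun x => 0 < x) (map size (FL n c A)) by rewrite filter_map.
  apply: sorted_filter; first exact: geq_trans.
  exact: FL_sizes.
- apply/allP => s; rewrite mem_filter => /andP[_ /mapP[r _ ->]]; exact: Frow_sorted.
- apply/allP => i; rewrite mem_iota => Hi; apply/allP => j; rewrite mem_iota => Hj.
  have HiS := size_F n c A.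
  move: Hj; rewrite /F !filter_nth ?FL_sizes // !nth_FL; try lia.
  move=> Hj; apply: Frow_col => //; lia.
- apply/allP => x; rewrite /F flatten_filter => /flattenP[s /mapP[r Hr ->] Hx].
  rewrite mem_iota in Hr.
  have := Frow_entry HA (r := r) _ Hx; move=> /(_ ltac:(lia)) /andP[h1 h2].
  by rewrite h1 /=; lia.
- apply/allP => s; rewrite mem_filter => /andP[_ /mapP[r Hr ->]].
  rewrite mem_iota in Hr; rewrite size_Frow; apply: Hc; lia.
- rewrite /F flatten_filter /FL.
  have -> : iota 0 n = 0 :: iota 1 n.-1 by case: (n) hn.
  rewrite /= count_cat.
  have -> : count (fun x => x == n) (flatten [seq Frow n c A r | r <- iota 1 n.-1]) = 0.
    apply/eqP; rewrite -leqn0 leqNgt -has_count; apply/hasPn => x /flattenP[s /mapP[r Hr ->] Hx].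
    rewrite mem_iota in Hr.
    have := Frow_entry HA (r := r) _ Hx; move=> /(_ ltac:(lia)) /andP[h1 h2]; lia.
  rewrite addn0 (eq_in_count (a2 := leq n)); last first.
    move=> x Hx; have := Frow_entry HA (r := 0) _ Hx; move=> /(_ ltac:(lia)) /andP[h1 h2].
    rewrite /=; lia.
  rewrite Frow_count // ?subn0 ?Hk //; lia.
Qed.

Lemma G_F n c A : is_GT n c A ->
  rep n (fun i j => count (leq i) (nth [::] (F n c A) (n - j))) = A.
Proof.
move=> HA; have [EA _ _ _] := GT_props HA.
rewrite [RHS]EA /rep; apply/eq_in_map => i; rewrite mem_iota => Hi.
apply/eq_in_map => j; rewrite mem_iota => Hj.
rewrite /F filter_nth ?FL_sizes // nth_FL; last lia.
rewrite Frow_count //; try lia.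
congr gt_entry; lia.
Qed.

Lemma F_norm n c A : is_GT n c A -> spp_norm (F n c A) = gt_norm A.
Proof.
move=> HA; have [EA _ _ _] := GT_props HA.
rewrite /spp_norm /gt_norm -sumn_flatten /F flatten_filter sumn_flatten /FL -map_comp.
rewrite (proj1 (eq_in_map _ (fun r => sumn [seq gt_entry n c A v (n - r) | v <- iota 1 (n - r)]) _)); last first.
  move=> r; rewrite mem_iota => Hr /=.
  rewrite (@sumn_count_le _ (n - r)); last first.
    apply/allP => x Hx; have := Frow_entry HA (r := r) _ Hx; move=> /(_ ltac:(lia)) /andP[_ ->] //.
  congr sumn; apply/eq_in_map => v; rewrite mem_iota => Hv.
  rewrite Frow_count //; lia.
rewrite (rev_idx (fun j => sumn [seq gt_entry n c A v j | v <- iota 1 j])).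
rewrite tri; congr sumn; rewrite [in RHS]EA /rep -map_comp.
by [].
Qed.

Lemma F_shape n c A : is_GT n c A -> forall i, 1 <= i ->
  spp_shape (F n c A) i = (if i <= n then gt_entry n c A 1 (n.+1 - i) else 0).
Proof.
move=> HA i Hi; rewrite /spp_shape /spp_row /F filter_nth ?FL_sizes //.
case: ifP => Hin.
- rewrite nth_FL; last lia.
  rewrite size_Frow; congr gt_entry; lia.
- by rewrite nth_default // size_map size_iota; lia.
Qed.

Definition G n (P : seq (seq nat)) := rep n (fun i j => count (leq i) (nth [::] P (n - j))).

Lemma geq_refl : reflexive geq.
Proof. by move=> a /=. Qed.


Lemma spp_sorted n c k P : spp_class n c k P -> forall r, sorted geq (nth [::] P r).
Proof.
move=> /and4P[/and4P[_ _ Hr _] _ _ _] r.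
case: (ltnP r (size P)) => h; last by rewrite nth_default.
exact: (allP Hr _ (mem_nth [::] h)).
Qed.

Lemma spp_size_dec n c k P : spp_class n c k P -> forall r,
  size (nth [::] P r.+1) <= size (nth [::] P r).
Proof.
move=> /and4P[/and4P[_ Hs _ _] _ _ _] r.
case: (ltnP r.+1 (size P)) => h; last by rewrite nth_default.
have := sorted_leq_nth geq_trans geq_refl 0 Hs; move=> /(_ r r.+1).
rewrite !inE !size_map. rewrite (nth_map (@nil nat) 0 size (n:=r)); last lia. rewrite (nth_map (@nil nat) 0 size (n:=r.+1)) //.
by apply; lia.
Qed.

Lemma spp_col n c k P : spp_class n c k P -> forall r q,
  q < size (nth [::] P r.+1) -> nth 0 (nth [::] P r.+1) q < nth 0 (nth [::] P r) q.
Proof.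
move=> /and4P[/and4P[_ _ _ Hc] _ _ _] r q Hq.
have h : r.+1 < size P.
  case: (ltnP r.+1 (size P)) => // h; move: Hq; rewrite nth_default //.
have Hr : r \in iota 0 (size P).-1 by rewrite mem_iota; lia.
have Hq' : q \in iota 0 (size (nth [::] P r.+1)) by rewrite mem_iota; lia.
exact: (allP (allP Hc r Hr) q Hq').
Qed.

Lemma spp_sizec n c k P : spp_class n c k P -> forall r, size (nth [::] P r) <= c.
Proof.
move=> /and4P[_ _ Hc _] r.
case: (ltnP r (size P)) => h; last by rewrite nth_default.
exact: (allP Hc _ (mem_nth [::] h)).
Qed.

Lemma spp_pos n c k P : spp_class n c k P -> forall r x, x \in nth [::] P r -> 1 <= x <= n.
Proof.
move=> /and4P[_ Ha _ _] r x Hx.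
case: (ltnP r (size P)) => h; last by move: Hx; rewrite nth_default.
apply: (allP Ha); apply/flattenP; exists (nth [::] P r) => //; exact: mem_nth.
Qed.

Lemma spp_bound n c k P : spp_class n c k P -> forall r q,
  q < size (nth [::] P r) -> nth 0 (nth [::] P r) q + r <= n.
Proof.
move=> HP; elim=> [|r IH] q Hq.
- have /andP[_ h] := spp_pos HP (mem_nth 0 Hq); by rewrite addn0.
- have h1 := spp_col HP Hq.
  have h2 := IH q (leq_trans Hq (spp_size_dec HP r)); lia.
Qed.

Lemma spp_entry n c k P : spp_class n c k P -> forall r x,
  x \in nth [::] P r -> 1 <= x /\ x + r <= n.
Proof.
move=> HP r x Hx; split; first by have /andP[] := spp_pos HP Hx.
by move/(nthP 0): Hx => [q Hq <-]; exact: (spp_bound HP Hq).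
Qed.

Lemma spp_sizeP n c k P : spp_class n c k P -> size P <= n.
Proof.
move=> HP; have /and4P[/and4P[Hne _ _ _] _ _ _] := HP.
case E: (size P) => [|m] //.
have Hm : m < size P by lia.
have Hnz : 0 < size (nth [::] P m) by apply: (allP Hne _ (mem_nth [::] Hm)).
have [h1 H] := spp_entry HP (mem_nth 0 Hnz); lia.
Qed.

Lemma spp_key n c k P : spp_class n c k P -> forall r v, 1 <= v ->
  count (leq v) (nth [::] P r.+1) <= count (leq v.+1) (nth [::] P r).
Proof.
move=> HP r v Hv.
case E: (count (leq v) (nth [::] P r.+1)) => [|t] //.
have Ht : t < count (leq v) (nth [::] P r.+1) by rewrite E.
have Hsz : t < size (nth [::] P r.+1) by apply: leq_trans Ht (count_size _ _).
rewrite (sorted_count_nth t (spp_sorted HP _) Hv) in Ht.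
have h := spp_col HP Hsz.
rewrite (sorted_count_nth t (spp_sorted HP _) (ltn0Sn v)); lia.
Qed.

Lemma G_class n c k P : 1 <= n -> spp_class n c k P -> gt_class n c k (G n P).
Proof.
move=> hn HP; rewrite /gt_class; apply/andP; split.
- apply: is_GT_rep.
  + move=> i j _ _ _; apply: leq_trans (count_size _ _) (spp_sizec HP _).
  + move=> i j h1 h2 h3 h4; apply: sub_count => x /=; lia.
  + move=> i j h1 h2 h3 h4.
    have -> : n - j = (n - j.+1).+1 by lia.
    have := spp_key HP (n - j.+1) (v := i.-1) ltac:(lia); rewrite prednK //; lia.
  + move=> i _ _; apply: leq_trans (count_size _ _) (spp_sizec HP _).
- rewrite rep_entry // subnn; apply/eqP.
  have /and4P[_ _ _ /eqP <-] := HP.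
  case E: P => [|s P'] //=.
  rewrite count_cat.
  have -> : count (fun x => x == n) (flatten P') = 0.
    apply/eqP; rewrite -leqn0 leqNgt -has_count; apply/hasPn => x /flattenP[s' Hs' Hx].
    move/(nthP [::]): Hs' => [r Hr Er].
    have : x \in nth [::] P r.+1 by rewrite E /= Er.
    move=> /(spp_entry HP) [_ h]; lia.
  rewrite addn0; apply: eq_in_count => x Hx.
  have : x \in nth [::] P 0 by rewrite E.
  move=> /(spp_entry HP) [_ h]; rewrite /=; lia.
Qed.

Lemma filter_nthP n P : size P <= n -> all nonempty P ->
  filter nonempty (map (nth [::] P) (iota 0 n)) = P.
Proof.
move=> Hs Ha.
have -> : n = size P + (n - size P) by lia.
rewrite iotaD map_cat filter_cat.
rewrite -/(mkseq _ _) mkseq_nth (all_filterP Ha).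
rewrite filter_nil_in ?cats0 // => x /mapP[r]; rewrite mem_iota => Hr ->.
by rewrite nth_default //; lia.
Qed.

Lemma F_G n c k P : spp_class n c k P -> F n c (G n P) = P.
Proof.
move=> HP; have /and4P[/and4P[Hne _ _ _] _ _ _] := HP.
rewrite /F /FL -[RHS](filter_nthP (spp_sizeP HP) Hne); congr filter.
apply/eq_in_map => r; rewrite mem_iota add0n => /andP[_ Hr].
have E : forall v, v \in iota 1 (n - r) ->
    gt_entry n c (G n P) v (n - r) = count (leq v) (nth [::] P r).
  move=> v; rewrite mem_iota => Hv.
  rewrite /G rep_entry; try lia.
  by rewrite subKn //; lia.
rewrite /Frow (E 1) ?mem_iota; last lia.
etransitivity; last apply: (conj2 (m := n - r)).
- apply: eq_map => q; apply: eq_in_count => v Hv /=; by rewrite E.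
- exact: spp_sorted HP r.
- apply/allP => x Hx; have [h1 h2] := spp_entry HP Hx; rewrite h1 /=; lia.
Qed.

Unset Implicit Arguments.

Theorem lemma2 (n c k : nat) (hn : 1 <= n) (hk : k <= c) :
  exists f : {A : seq (seq nat) | gt_class n c k A} ->
             {P : seq (seq nat) | spp_class n c k P},
    bijective f /\
    (forall A, spp_norm (val (f A)) = gt_norm (val A)) /\
    (forall A (i : nat), 1 <= i ->
       spp_shape (val (f A)) i =
       (if i <= n then gt_entry n c (val A) 1 (n.+1 - i) else 0)).
Proof.
have Hf : forall A, gt_class n c k A -> spp_class n c k (F n c A).
  by move=> A /andP[HA /eqP Hk]; apply: F_class.
have Hg : forall P, spp_class n c k P -> gt_class n c k (G n P).
  by move=> P HP; apply: G_class.
exists (fun x => exist _ (F n c (val x)) (Hf _ (valP x))).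
split; last split.
- exists (fun y => exist _ (G n (val y)) (Hg _ (valP y))).
  + move=> [A HA]; apply: val_inj => /=.
    by have /andP[HA' _] := HA; rewrite /G G_F.
  + move=> [P HP]; apply: val_inj => /=; exact: F_G HP.
- by move=> [A /andP[HA _]] /=; apply: F_norm.
- by move=> [A /andP[HA _]] i Hi /=; apply: F_shape.
Qed.
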